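(* Let $\mathcal{P}$ be a program and $G$ a goal of Prolog$^{\oplus,\&}$, as defined in the context. Then $\mathrm{exec}(\mathcal{P},G)$ holds (execution of $\langle \mathcal{P}, G\rangle$ terminates with a success) if and only if $G$ is provable from $!\mathcal{P}$ in Lolli, that is, in intuitionistic linear logic: the sequent $!\mathcal{P} \vdash G$ is derivable.
   Context: Prolog$^{\oplus,\&}$ is a first-order language whose goal formulas $G$ and clauses $D$ are given by $G ::= A \mid G\otimes G \mid \exists x\, G \mid G \& G \mid G \oplus G$ and $D ::= A \mid G \supset A \mid \forall x\, D$, where $A$ ranges over atomic formulas. A program $\mathcal{P}$ is a set of clauses. Inside linear logic (Lolli), $\otimes$ is multiplicative conjunction, $\&$ additive conjunction, and $\oplus$ additive disjunction. The symbol $\supset$ is Lolli's intuitionistic implication, i.e. $G \supset A$ stands for $!G \multimap A$. Finally, $!\mathcal{P}$ denotes $\{!D : D\in\mathcal{P}\}$, so every clause is treated as a reusable resource. Notation: $D;\mathcal{P}$ denotes $\{D\}\cup\mathcal{P}$ with $D$ marked as the distinguished clause used for backchaining. $[t/x]$ denotes substitution of a term $t$ for $x$. The standard relation $\mathrm{prov}$ is defined inductively by: (1) $\mathrm{prov}(A;\mathcal{P},A)$; (2) $\mathrm{prov}((G_1\supset A);\mathcal{P},A)$ if $\mathrm{prov}(\mathcal{P},G_1)$; (3) $\mathrm{prov}(\forall x D;\mathcal{P},A)$ if $\mathrm{prov}([t/x]D;\mathcal{P},A)$ for some term $t$; (4) $\mathrm{prov}(\mathcal{P},A)$ if $D\in\mathcal{P}$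 and $\mathrm{prov}(D;\mathcal{P},A)$; (5) $\mathrm{prov}(\mathcal{P},G_1\otimes G_2)$ if $\mathrm{prov}(\mathcal{P},G_1)$ and $\mathrm{prov}(\mathcal{P},G_2)$; (6) $\mathrm{prov}(\mathcal{P},G_1\& G_2)$ if $\mathrm{prov}(\mathcal{P},G_1)$ and $\mathrm{prov}(\mathcal{P},G_2)$; (7) $\mathrm{prov}(\mathcal{P},G_1\oplus G_2)$ if $\mathrm{prov}(\mathcal{P},G_1)$ or $\mathrm{prov}(\mathcal{P},G_2)$; (8) $\mathrm{prov}(\mathcal{P},\exists x G_1)$ if $\mathrm{prov}(\mathcal{P},[t/x]G_1)$ for some term $t$. The new interactive execution relation $\mathrm{exec}$ is defined by the same clauses (1)–(5) and (8), with $\mathrm{exec}$ in place of $\mathrm{prov}$, together with two further rules: (a) $\mathrm{exec}(\mathcal{P},G_0\& G_1)$ if $\mathrm{exec}(\mathcal{P},G_i)$ and $\mathrm{prov}(\mathcal{P},G_{(i+1)\bmod 2})$, where the index $i\in\{0,1\}$ is chosen by the user. The result is claimed whatever choices the user makes. (b) $\mathrm{exec}(\mathcal{P},G_0\oplus G_1)$ if $\mathrm{exec}(\mathcal{P},G_i)$ for some $i\in\{0,1\}$ chosen by the machine. *)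

(* Defs.v *)
From Stdlib Require Import List Arith Permutation.
Import ListNotations.

(** * First-order syntax (locally nameless: bound variables are de Bruijn
    indices [BVar], free variables / parameters are [FVar]). *)
Inductive term : Type :=
| BVar : nat -> term
| FVar : nat -> term
| Fn   : nat -> list term -> term.

Fixpoint topen (k : nat) (u : term) (t : term) : term :=
  match t with
  | BVar n => if Nat.eqb n k then u else BVar n
  | FVar n => FVar n
  | Fn f l => Fn f (map (topen k u) l)
  end.

Fixpoint tfv (t : term) : list nat :=
  match t with
  | BVar _ => []
  | FVar n => [n]
  | Fn _ l => flat_map tfv l
  end.

Fixpoint tlc_at (k : nat) (t : term) : bool :=
  match t with
  | BVar n => Nat.ltb n k
  | FVar _ => true
  | Fn _ l => forallb (tlc_at k) l
  end.

Definition tlc (t : term) : Prop := tlc_at 0 t = true.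

Definition atom_open k u (l : list term) := map (topen k u) l.
Definition atom_fv (l : list term) := flat_map tfv l.
Definition atom_lc_at k (l : list term) := forallb (tlc_at k) l.

Inductive goal : Type :=
| GAtom   : nat -> list term -> goal
| GTensor : goal -> goal -> goal
| GEx     : goal -> goal
| GWith   : goal -> goal -> goal
| GPlus   : goal -> goal -> goal.

Inductive clause : Type :=
| DAtom : nat -> list term -> clause
| DImp  : goal -> nat -> list term -> clause
| DAll  : clause -> clause.

Definition program := list clause.

Fixpoint gopen (k : nat) (u : term) (g : goal) : goal :=
  match g with
  | GAtom p l => GAtom p (atom_open k u l)
  | GTensor a b => GTensor (gopen k u a) (gopen k u b)
  | GEx a => GEx (gopen (S k) u a)
  | GWith a b => GWith (gopen k u a) (gopen k u b)
  | GPlus a b => GPlus (gopen k u a) (gopen k u b)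
  end.

Fixpoint dopen (k : nat) (u : term) (d : clause) : clause :=
  match d with
  | DAtom p l => DAtom p (atom_open k u l)
  | DImp g p l => DImp (gopen k u g) p (atom_open k u l)
  | DAll d' => DAll (dopen (S k) u d')
  end.

Fixpoint goal_lc_at (k : nat) (g : goal) : bool :=
  match g with
  | GAtom _ l => atom_lc_at k l
  | GTensor a b | GWith a b | GPlus a b => goal_lc_at k a && goal_lc_at k b
  | GEx a => goal_lc_at (S k) a
  end.

Fixpoint clause_lc_at (k : nat) (d : clause) : bool :=
  match d with
  | DAtom _ l => atom_lc_at k l
  | DImp g _ l => goal_lc_at k g && atom_lc_at k l
  | DAll d' => clause_lc_at (S k) d'
  end.

Definition goal_lc (g : goal) : Prop := goal_lc_at 0 g = true.
Definition program_lc (P : program) : Prop :=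
  forall D, In D P -> clause_lc_at 0 D = true.

(** * The standard relation prov.
    [provD P D p l] is prov(D;P, A) with A = p(l): D is the distinguished
    clause used for backchaining (always a member of P, by rule (4)). *)
Inductive prov : program -> goal -> Prop :=
| prov_atom : forall P D p l,
    In D P -> provD P D p l -> prov P (GAtom p l)
| prov_tensor : forall P g1 g2,
    prov P g1 -> prov P g2 -> prov P (GTensor g1 g2)
| prov_with : forall P g1 g2,
    prov P g1 -> prov P g2 -> prov P (GWith g1 g2)
| prov_plus_l : forall P g1 g2,
    prov P g1 -> prov P (GPlus g1 g2)
| prov_plus_r : forall P g1 g2,
    prov P g2 -> prov P (GPlus g1 g2)
| prov_ex : forall P g t,
    tlc t -> prov P (gopen 0 t g) -> prov P (GEx g)
with provD : program -> clause -> nat -> list term -> Prop :=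
| provD_atom : forall P p l, provD P (DAtom p l) p l
| provD_imp : forall P g p l,
    prov P g -> provD P (DImp g p l) p l
| provD_all : forall P D p l t,
    tlc t -> provD P (dopen 0 t D) p l -> provD P (DAll D) p l.

(** The user's choice at an additive conjunction G0 & G1 is given by a
    strategy [uc]: [uc P G0 G1 = false] means i = 0, [true] means i = 1.
    The machine's choice at G0 (+) G1 is existential. *)
Definition user_choice := program -> goal -> goal -> bool.

Inductive exec (uc : user_choice) : program -> goal -> Prop :=
| exec_atom : forall P D p l,
    In D P -> execD uc P D p l -> exec uc P (GAtom p l)
| exec_tensor : forall P g1 g2,
    exec uc P g1 -> exec uc P g2 -> exec uc P (GTensor g1 g2)
| exec_with0 : forall P g0 g1,
    uc P g0 g1 = false -> exec uc P g0 -> prov P g1 ->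
    exec uc P (GWith g0 g1)
| exec_with1 : forall P g0 g1,
    uc P g0 g1 = true -> exec uc P g1 -> prov P g0 ->
    exec uc P (GWith g0 g1)
| exec_plus_l : forall P g0 g1,
    exec uc P g0 -> exec uc P (GPlus g0 g1)
| exec_plus_r : forall P g0 g1,
    exec uc P g1 -> exec uc P (GPlus g0 g1)
| exec_ex : forall P g t,
    tlc t -> exec uc P (gopen 0 t g) -> exec uc P (GEx g)
with execD (uc : user_choice) : program -> clause -> nat -> list term -> Prop :=
| execD_atom : forall P p l, execD uc P (DAtom p l) p l
| execD_imp : forall P g p l,
    exec uc P g -> execD uc P (DImp g p l) p l
| execD_all : forall P D p l t,
    tlc t -> execD uc P (dopen 0 t D) p l -> execD uc P (DAll D) p l.

Inductive form : Type :=
| Atom   : nat -> list term -> form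
| One    : form
| Top    : form
| Zero   : form
| Tensor : form -> form -> form
| With   : form -> form -> form
| Plus   : form -> form -> form
| Lolli  : form -> form -> form
| Bang   : form -> form
| All    : form -> form
| Ex     : form -> form.

Fixpoint fopen (k : nat) (u : term) (A : form) : form :=
  match A with
  | Atom p l => Atom p (atom_open k u l)
  | One => One | Top => Top | Zero => Zero
  | Tensor a b => Tensor (fopen k u a) (fopen k u b)
  | With a b => With (fopen k u a) (fopen k u b)
  | Plus a b => Plus (fopen k u a) (fopen k u b)
  | Lolli a b => Lolli (fopen k u a) (fopen k u b)
  | Bang a => Bang (fopen k u a)
  | All a => All (fopen (S k) u a)
  | Ex a => Ex (fopen (S k) u a)
  end.

Fixpoint ffv (A : form) : list nat :=
  match A with
  | Atom _ l => atom_fv l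
  | One | Top | Zero => []
  | Tensor a b | With a b | Plus a b | Lolli a b => ffv a ++ ffv b
  | Bang a | All a | Ex a => ffv a
  end.

Definition ctx_fv (G : list form) : list nat := flat_map ffv G.

(* Cut-free sequent calculus for first-order ILL; sequents  Gamma |- C
   with Gamma a multiset (list modulo exchange). *)
Inductive ill : list form -> form -> Prop :=
| ill_id : forall A, ill [A] A
| ill_ex : forall G G' C, Permutation G G' -> ill G C -> ill G' C
| ill_weak : forall G A C, ill G C -> ill (Bang A :: G) C
| ill_contr : forall G A C, ill (Bang A :: Bang A :: G) C -> ill (Bang A :: G) C
| ill_der : forall G A C, ill (A :: G) C -> ill (Bang A :: G) C
| ill_prom : forall D A, ill (map Bang D) A -> ill (map Bang D) (Bang A)
| ill_oneR : ill [] One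
| ill_oneL : forall G C, ill G C -> ill (One :: G) C
| ill_topR : forall G, ill G Top
| ill_zeroL : forall G C, ill (Zero :: G) C
| ill_tensorR : forall G D A B, ill G A -> ill D B -> ill (G ++ D) (Tensor A B)
| ill_tensorL : forall G A B C, ill (A :: B :: G) C -> ill (Tensor A B :: G) C
| ill_lolliR : forall G A B, ill (A :: G) B -> ill G (Lolli A B)
| ill_lolliL : forall G D A B C,
    ill G A -> ill (B :: D) C -> ill (Lolli A B :: G ++ D) C
| ill_withR : forall G A B, ill G A -> ill G B -> ill G (With A B)
| ill_withL1 : forall G A B C, ill (A :: G) C -> ill (With A B :: G) C
| ill_withL2 : forall G A B C, ill (B :: G) C -> ill (With A B :: G) C
| ill_plusR1 : forall G A B, ill G A -> ill G (Plus A B)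
| ill_plusR2 : forall G A B, ill G B -> ill G (Plus A B)
| ill_plusL : forall G A B C,
    ill (A :: G) C -> ill (B :: G) C -> ill (Plus A B :: G) C
| ill_allR : forall G A x,
    ~ In x (ctx_fv G ++ ffv A) -> ill G (fopen 0 (FVar x) A) -> ill G (All A)
| ill_allL : forall G A C t,
    tlc t -> ill (fopen 0 t A :: G) C -> ill (All A :: G) C
| ill_exR : forall G A t, tlc t -> ill G (fopen 0 t A) -> ill G (Ex A)
| ill_exL : forall G A C x,
    ~ In x (ctx_fv G ++ ffv A ++ ffv C) ->
    ill (fopen 0 (FVar x) A :: G) C -> ill (Ex A :: G) C.

Fixpoint gform (g : goal) : form :=
  match g with
  | GAtom p l => Atom p l
  | GTensor a b => Tensor (gform a) (gform b)
  | GEx a => Ex (gform a)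
  | GWith a b => With (gform a) (gform b)
  | GPlus a b => Plus (gform a) (gform b)
  end.

Fixpoint dform (d : clause) : form :=
  match d with
  | DAtom p l => Atom p l
  | DImp g p l => Lolli (Bang (gform g)) (Atom p l)
  | DAll d' => All (dform d')
  end.

Definition bang_program (P : program) : list form :=
  map (fun D => Bang (dform D)) P.

(* Main.v *)
Require Import Defs.
From Stdlib Require Import List Arith Permutation.
From Stdlib Require Import Setoid Lia Bool.
Import ListNotations.

Scheme prov_mut := Induction for prov Sort Prop
with provD_mut := Induction for provD Sort Prop.
Scheme exec_mut := Induction for exec Sort Prop
with execD_mut := Induction for execD Sort Prop.

Lemma gform_open : forall g k u, gform (gopen k u g) = fopen k u (gform g).
Proof. induction g; intros; simpl; f_equal; auto. Qed.

Lemma dform_open : forall d k u, dform (dopen k u d) = fopen k u (dform d).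
Proof. induction d; intros; simpl; rewrite ?gform_open, ?IHd; auto. Qed.

Lemma exec_prov uc : forall P g, exec uc P g -> prov P g.
Proof.
  apply (exec_mut uc (fun P g _ => prov P g) (fun P D p l _ => provD P D p l));
    intros; try (econstructor; eauto; fail).
Qed.

Lemma prov_exec uc : forall P g, prov P g -> exec uc P g.
Proof.
  apply (prov_mut (fun P g _ => exec uc P g) (fun P D p l _ => execD uc P D p l));
    intros; try (econstructor; eauto; fail).
  destruct (uc P g1 g2) eqn:E.
  - apply exec_with1; auto.
  - apply exec_with0; auto.
Qed.

Lemma weak_bangs : forall X G C, ill G C -> ill (map Bang X ++ G) C.
Proof. induction X; intros; simpl; auto. apply ill_weak; auto. Qed.

Lemma contr_bangs : forall X R C,
  ill (map Bang X ++ map Bang X ++ R) C -> ill (map Bang X ++ R) C.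
Proof.
  induction X as [|a X IH]; intros R C H; simpl in *; auto.
  assert (H1 : ill (Bang a :: Bang a :: (map Bang X ++ map Bang X ++ R)) C).
  { eapply ill_ex; [|exact H].
    apply perm_skip. symmetry. apply Permutation_middle. }
  apply ill_contr in H1.
  assert (H2 : ill (map Bang X ++ map Bang X ++ (Bang a :: R)) C).
  { eapply ill_ex; [|exact H1]. rewrite !app_assoc. apply Permutation_middle. }
  apply IH in H2. eapply ill_ex; [|exact H2]. symmetry. apply Permutation_middle.
Qed.

Lemma bp_map P : bang_program P = map Bang (map dform P).
Proof. unfold bang_program. rewrite map_map. reflexivity. Qed.

Lemma prov_ill : forall P g, prov P g -> ill (bang_program P) (gform g).
Proof.
  apply (prov_mut (fun P g _ => ill (bang_program P) (gform g))
                  (fun P D p l _ => ill (dform D :: bang_program P) (Atom p l)));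
    intros; simpl.
  - apply in_split in i. destruct i as [l1 [l2 E]]. subst P.
    unfold bang_program in *. rewrite map_app in *. simpl in *.
    assert (H1 : ill (dform D :: Bang (dform D) :: map (fun D => Bang (dform D)) l1 ++
                    map (fun D => Bang (dform D)) l2) (Atom p l)).
    { eapply ill_ex; [|exact H]. apply perm_skip. symmetry. apply Permutation_middle. }
    eapply ill_ex; [apply Permutation_middle|].
    apply ill_contr. apply ill_der. exact H1.
  - rewrite bp_map in *. rewrite <- (app_nil_r (map Bang (map dform P))).
    apply contr_bangs. rewrite app_nil_r.
    change (ill (map Bang (map dform P) ++ map Bang (map dform P)) (Tensor (gform g1) (gform g2))).
    apply ill_tensorR; auto.
  - apply ill_withR; auto.
  - apply ill_plusR1; auto.
  - apply ill_plusR2; auto.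
  - apply ill_exR with t; auto. rewrite <- gform_open; auto.
  - rewrite bp_map. apply ill_ex with (map Bang (map dform P) ++ [Atom p l]).
    + symmetry. apply Permutation_cons_append.
    + apply weak_bangs. apply ill_id.
  - rewrite <- (app_nil_r (bang_program P)).
    apply ill_lolliL; [|apply ill_id].
    rewrite bp_map in *. apply ill_prom. auto.
  - apply ill_allL with t; auto. rewrite <- dform_open; auto.
Qed.

Fixpoint fsize (A : form) : nat :=
  match A with
  | Atom _ _ | One | Top | Zero => 1
  | Tensor a b | With a b | Plus a b | Lolli a b => S (fsize a + fsize b)
  | Bang a | All a | Ex a => S (fsize a)
  end.

Lemma fsize_open : forall A k u, fsize (fopen k u A) = fsize A.
Proof. induction A; intros; simpl; auto. Qed.

Fixpoint semf (P : program) (n : nat) (A : form) : Prop :=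
  match n with
  | 0 => True
  | S n =>
    match A with
    | Atom p l => prov P (GAtom p l)
    | One | Top => True
    | Zero => False
    | Tensor a b | With a b => semf P n a /\ semf P n b
    | Plus a b => semf P n a \/ semf P n b
    | Lolli a b => semf P n a -> semf P n b
    | Bang a => semf P n a
    | All a => forall t, tlc t -> semf P n (fopen 0 t a)
    | Ex a => exists t, tlc t /\ semf P n (fopen 0 t a)
    end
  end.

Lemma semf_stable P : forall n A m, fsize A <= n -> fsize A <= m ->
  (semf P n A <-> semf P m A).
Proof.
  induction n; intros A m H1 H2.
  { destruct A; simpl in H1; lia. }
  destruct m. { destruct A; simpl in H2; lia. }
  destruct A; simpl in *; try tauto.
  - rewrite (IHn A1 m), (IHn A2 m) by lia. tauto.
  - rewrite (IHn A1 m), (IHn A2 m) by lia. tauto.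
  - rewrite (IHn A1 m), (IHn A2 m) by lia. tauto.
  - rewrite (IHn A1 m), (IHn A2 m) by lia. tauto.
  - rewrite (IHn A m) by lia. tauto.
  - split; intros H t Ht; specialize (H t Ht);
      [rewrite <- (IHn _ m) | rewrite (IHn _ m)]; auto; rewrite fsize_open; lia.
  - split; intros [t [Ht H]]; exists t; split; auto;
      [rewrite <- (IHn _ m) | rewrite (IHn _ m)]; auto; rewrite fsize_open; lia.
Qed.

Definition sem P A := semf P (fsize A) A.

Ltac stab P := repeat rewrite (semf_stable P _ _ (fsize _)) by lia.

Lemma sem_atom P p l : sem P (Atom p l) <-> prov P (GAtom p l).
Proof. reflexivity. Qed.
Lemma sem_tensor P a b : sem P (Tensor a b) <-> sem P a /\ sem P b.
Proof. unfold sem; simpl. rewrite (semf_stable P _ a (fsize a)), (semf_stable P _ b (fsize b)) by lia. tauto. Qed.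
Lemma sem_with P a b : sem P (With a b) <-> sem P a /\ sem P b.
Proof. unfold sem; simpl. rewrite (semf_stable P _ a (fsize a)), (semf_stable P _ b (fsize b)) by lia. tauto. Qed.
Lemma sem_plus P a b : sem P (Plus a b) <-> sem P a \/ sem P b.
Proof. unfold sem; simpl. rewrite (semf_stable P _ a (fsize a)), (semf_stable P _ b (fsize b)) by lia. tauto. Qed.
Lemma sem_lolli P a b : sem P (Lolli a b) <-> (sem P a -> sem P b).
Proof. unfold sem; simpl. rewrite (semf_stable P _ a (fsize a)), (semf_stable P _ b (fsize b)) by lia. tauto. Qed.
Lemma sem_bang P a : sem P (Bang a) <-> sem P a.
Proof. reflexivity. Qed.
Lemma sem_all P a : sem P (All a) <-> forall t, tlc t -> sem P (fopen 0 t a).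
Proof. unfold sem; simpl. split; intros H t Ht; specialize (H t Ht); rewrite fsize_open in *; auto. Qed.
Lemma sem_ex P a : sem P (Ex a) <-> exists t, tlc t /\ sem P (fopen 0 t a).
Proof. unfold sem; simpl. split; intros [t [Ht H]]; exists t; rewrite fsize_open in *; auto. Qed.

Fixpoint Rc (A : form) : bool :=
  match A with
  | Atom _ _ | One | Top | Zero => true
  | Tensor a b | With a b | Plus a b => Rc a && Rc b
  | Lolli _ _ | All _ => false
  | Bang a | Ex a => Rc a
  end.
Fixpoint Lc (A : form) : bool :=
  match A with
  | Atom _ _ | One | Top | Zero => true
  | Tensor a b | With a b | Plus a b => Lc a && Lc b
  | Lolli a b => Rc a && Lc b
  | Bang a | All a => Lc a
  | Ex _ => false
  end.

Lemma LcRc_open : forall A k u, Lc (fopen k u A) = Lc A /\ Rc (fopen k u A) = Rc A.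
Proof.
  induction A; intros; simpl; auto;
  try (destruct (IHA1 k u), (IHA2 k u); split; congruence);
  try (destruct (IHA k u); split; congruence);
  try (destruct (IHA (S k) u); split; congruence).
Qed.

Lemma Lc_open A k u : Lc (fopen k u A) = Lc A. Proof. apply LcRc_open. Qed.
Lemma Rc_open A k u : Rc (fopen k u A) = Rc A. Proof. apply LcRc_open. Qed.

Lemma ill_sound P : forall G C, ill G C ->
  (forall F, In F G -> Lc F = true) -> Rc C = true ->
  (forall F, In F G -> sem P F) -> sem P C.
Proof.
  induction 1; intros HL HR HS; simpl in HR.
  - apply HS; simpl; auto.
  - apply IHill; intros; [apply HL|auto|apply HS]; eapply Permutation_in; eauto.
  - apply IHill; auto; intros; [apply HL|apply HS]; simpl; auto.
  - apply IHill; auto; intros F HF; [apply HL|apply HS]; simpl in *; tauto.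
  - apply IHill; auto; intros F [E|E]; subst.
    + specialize (HL _ (or_introl eq_refl)); auto.
    + apply HL; simpl; auto.
    + specialize (HS _ (or_introl eq_refl)). rewrite sem_bang in HS. auto.
    + apply HS; simpl; auto.
  - rewrite sem_bang. apply IHill; auto.
  - exact I.
  - apply IHill; auto; intros; [apply HL|apply HS]; simpl; auto.
  - exact I.
  - specialize (HS _ (or_introl eq_refl)). destruct HS.
  - rewrite sem_tensor. apply andb_true_iff in HR as [? ?].
    split; [apply IHill1|apply IHill2]; auto; intros; (apply HL || apply HS);
      apply in_or_app; auto.
  - specialize (HL _ (or_introl eq_refl)) as HL0. specialize (HS _ (or_introl eq_refl)) as HS0.
    simpl in HL0. rewrite sem_tensor in HS0. apply andb_true_iff in HL0 as [? ?].
    apply IHill; auto; intros F [E|[E|E]]; subst; try tauto; auto;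
      [apply HL|apply HS]; simpl; auto.
  - discriminate.
  - specialize (HL _ (or_introl eq_refl)) as HL0. specialize (HS _ (or_introl eq_refl)) as HS0.
    simpl in HL0. rewrite sem_lolli in HS0. apply andb_true_iff in HL0 as [? ?].
    apply IHill2; auto.
    + intros F [E|E]; subst; auto. apply HL. right; apply in_or_app; auto.
    + intros F [E|E]; subst.
      * apply HS0. apply IHill1; auto; intros; [apply HL|apply HS]; right; apply in_or_app; auto.
      * apply HS. right; apply in_or_app; auto.
  - rewrite sem_with. apply andb_true_iff in HR as [? ?]. split; auto.
  - specialize (HL _ (or_introl eq_refl)) as HL0. specialize (HS _ (or_introl eq_refl)) as HS0.
    simpl in HL0. rewrite sem_with in HS0. apply andb_true_iff in HL0 as [? ?].
    apply IHill; auto; intros F [E|E]; subst; try tauto; auto;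
      [apply HL|apply HS]; simpl; auto.
  - specialize (HL _ (or_introl eq_refl)) as HL0. specialize (HS _ (or_introl eq_refl)) as HS0.
    simpl in HL0. rewrite sem_with in HS0. apply andb_true_iff in HL0 as [? ?].
    apply IHill; auto; intros F [E|E]; subst; try tauto; auto;
      [apply HL|apply HS]; simpl; auto.
  - rewrite sem_plus. apply andb_true_iff in HR as [? ?]. left; auto.
  - rewrite sem_plus. apply andb_true_iff in HR as [? ?]. right; auto.
  - specialize (HL _ (or_introl eq_refl)) as HL0. specialize (HS _ (or_introl eq_refl)) as HS0.
    simpl in HL0. rewrite sem_plus in HS0. apply andb_true_iff in HL0 as [? ?].
    destruct HS0 as [HS0|HS0]; [apply IHill1|apply IHill2]; auto;
      intros F [E|E]; subst; auto; [apply HL|apply HS|apply HL|apply HS]; simpl; auto.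
  - discriminate.
  - specialize (HL _ (or_introl eq_refl)) as HL0. specialize (HS _ (or_introl eq_refl)) as HS0.
    simpl in HL0. rewrite sem_all in HS0.
    apply IHill; auto; intros F [E|E]; subst; auto.
    + rewrite Lc_open; auto.
    + apply HL; simpl; auto.
    + apply HS; simpl; auto.
  - rewrite sem_ex. exists t. split; auto. apply IHill; auto. rewrite Rc_open; auto.
  - specialize (HL _ (or_introl eq_refl)). discriminate.
Qed.

Fixpoint gsize (g : goal) : nat :=
  match g with
  | GAtom _ _ => 1
  | GTensor a b | GWith a b | GPlus a b => S (gsize a + gsize b)
  | GEx a => S (gsize a)
  end.

Lemma gsize_open : forall g k u, gsize (gopen k u g) = gsize g.
Proof. induction g; intros; simpl; auto. Qed.

Lemma sem_goal P : forall n g, gsize g <= n -> sem P (gform g) -> prov P g.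
Proof.
  induction n; intros g Hn H. { destruct g; simpl in Hn; lia. }
  destruct g; simpl in *.
  - exact H.
  - rewrite sem_tensor in H. destruct H. constructor; apply IHn; auto; lia.
  - rewrite sem_ex in H. destruct H as [t [Ht H]]. apply prov_ex with t; auto.
    apply IHn. rewrite gsize_open; lia. rewrite gform_open; auto.
  - rewrite sem_with in H. destruct H. constructor; apply IHn; auto; lia.
  - rewrite sem_plus in H. destruct H; [apply prov_plus_l|apply prov_plus_r];
      apply IHn; auto; lia.
Qed.

Fixpoint csize (d : clause) : nat :=
  match d with
  | DAtom _ _ | DImp _ _ _ => 1
  | DAll d => S (csize d)
  end.

Lemma csize_open : forall d k u, csize (dopen k u d) = csize d.
Proof. induction d; intros; simpl; auto. Qed.

Lemma sem_clause P : forall n d, csize d <= n ->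
  (forall p l, provD P d p l -> prov P (GAtom p l)) -> sem P (dform d).
Proof.
  induction n; intros d Hn H. { destruct d; simpl in Hn; lia. }
  destruct d; simpl in *.
  - apply H. constructor.
  - rewrite sem_lolli, sem_bang. intro Hg. apply H. constructor.
    eapply sem_goal; eauto.
  - rewrite sem_all. intros t Ht. rewrite <- dform_open. apply IHn.
    rewrite csize_open; lia.
    intros p l Hp. apply H. econstructor; eauto.
Qed.

Lemma Rc_gform : forall g, Rc (gform g) = true.
Proof. induction g; simpl; rewrite ?IHg1, ?IHg2, ?IHg; auto. Qed.

Lemma Lc_dform : forall d, Lc (dform d) = true.
Proof. induction d; simpl; rewrite ?Rc_gform; auto. Qed.

Lemma ill_prov P g : ill (bang_program P) (gform g) -> prov P g.
Proof.
  intro H. eapply sem_goal; [apply le_n|].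
  eapply ill_sound; eauto.
  - intros F HF. unfold bang_program in HF. apply in_map_iff in HF.
    destruct HF as [D [<- _]]. apply Lc_dform.
  - apply Rc_gform.
  - intros F HF. unfold bang_program in HF. apply in_map_iff in HF.
    destruct HF as [D [<- HD]]. rewrite sem_bang. eapply sem_clause; [apply le_n|].
    intros. econstructor; eauto.
Qed.

Theorem mainTheorem1 (uc : user_choice) (P : program) (G : goal) :
  program_lc P -> goal_lc G ->
  (exec uc P G <-> ill (bang_program P) (gform G)).
Proof.
  intros _ _. split; intro H.
  - apply prov_ill. eapply exec_prov; eauto.
  - apply prov_exec. apply ill_prov. auto.
Qed.
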